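(* Let $\varphi=\frac{1+\sqrt5}{2}$. (i) If $x\in[0,1]\setminus\mathbb{Q}$ and all partial quotients of the continued fraction expansion of $x$ are at most $2$, then $g'_{\varphi^{-1}}(x)=+\infty$. (ii) There exists $y\in[0,1]\setminus\mathbb{Q}$ all of whose partial quotients are at most $3$ such that $g'_{\varphi^{-1}}(y)=0$.
   Context: For irrational $x\in(0,1)$, $x=[0;a_1,a_2,\ldots]$ is its regular continued fraction with partial quotients $a_i$. For $\lambda\in(0,1)$ the Denjoy–Tichy–Uitz function $g_\lambda:[0,1]\to[0,1]$ is defined by $g_\lambda(0)=0$, $g_\lambda(1)=1$, and, whenever $g_\lambda$ is defined at two consecutive Farey fractions $\frac pq<\frac rs$, $g_\lambda\!\left(\frac{p+r}{q+s}\right)=(1-\lambda)g_\lambda\!\left(\frac pq\right)+\lambda g_\lambda\!\left(\frac rs\right)$, extended by continuity. For irrational $x$, $g_{\varphi^{-1}}(x)=\sum_{i\ge1}(-1)^{i-1}\varphi^{-(a_1+2a_2+a_3+2a_4+\cdots+c_ia_i-1)}$ where $c_i=1$ for odd $i$ and $c_i=2$ for even $i$. Derivatives are two-sided and may equal $+\infty$. *)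

(* Defs.v *)
From Stdlib Require Import Reals Lra Lia ZArith.
From Coquelicot Require Import Coquelicot.
Open Scope R_scope.

Definition phi : R := (1 + sqrt 5) / 2.

Definition irrational (x : R) : Prop :=
  forall p q : Z, q <> 0%Z -> x <> IZR p / IZR q.

Definition gauss (t : R) : R := / t - IZR (Int_part (/ t)).

(** [pq x n] is the partial quotient a_{n+1} of x = [0; a_1, a_2, ...]:
    a_{n+1} = floor (1 / T^n(x)). *)
Definition pq (x : R) (n : nat) : Z := Int_part (/ (Nat.iter n gauss x)).

Definition farey_consecutive (p q r s : nat) : Prop :=
  (0 < q)%nat /\ (0 < s)%nat /\ (r <= s)%nat /\ (r * q = p * s + 1)%nat.

(** [g] is the Denjoy-Tichy-Uitz function g_lambda on [0,1]:
    g(0)=0, g(1)=1, the mediant rule at consecutive Farey fractions,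
    and g is continuous on [0,1] (the "extension by continuity"). *)
Definition is_DTU (lambda : R) (g : R -> R) : Prop :=
  g 0 = 0 /\ g 1 = 1 /\
  (forall p q r s : nat, farey_consecutive p q r s ->
     g ((INR p + INR r) / (INR q + INR s)) =
       (1 - lambda) * g (INR p / INR q) + lambda * g (INR r / INR s)) /\
  (forall t, 0 <= t <= 1 -> filterlim g (within (fun u => 0 <= u <= 1) (locally t)) (locally (g t))).

(* Main.v *)
Require Import Defs.
From Stdlib Require Import Reals Lra Lia Psatz ZArith Classical.
From Coquelicot Require Import Coquelicot.
Open Scope R_scope.

Definition lam : R := / phi.

Lemma phi_facts : phi * phi = phi + 1 /\ 1.618033 < phi < 1.618034.
Proof.
  unfold phi. assert (H5 := sqrt_sqrt 5 ltac:(lra)). assert (H0 := sqrt_pos 5).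
  split. nra.
  split; nra.
Qed.

Lemma lam_eq : lam = phi - 1.
Proof. unfold lam. destruct phi_facts as [H [H1 H2]]. field_simplify_eq; nra. Qed.

Lemma lam_bounds : 0.618033 < lam < 0.618034 /\ 1 - lam = lam * lam.
Proof. rewrite lam_eq. destruct phi_facts as [H [H1 H2]]. split. lra. nra. Qed.

Definition vec := (nat*nat)%type.
Definition vl (u:vec) : R := INR (fst u) / INR (snd u).
Definition vadd (u v:vec) : vec := (fst u + fst v, snd u + snd v)%nat.
Definition adj (u v : vec) : Prop := farey_consecutive (fst u) (snd u) (fst v) (snd v).
Definition adjo (b:bool) u v := if b then adj u v else adj v u.
Definition mu (b:bool) := if b then lam else 1 - lam.

Lemma med g (Hg: is_DTU lam g) u v : adj u v ->
  g (vl (vadd u v)) = (1-lam)*g(vl u) + lam*g(vl v).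
Proof.
  destruct u as [p q], v as [r s]. unfold adj, vl, vadd; simpl. intro H.
  destruct Hg as [_ [_ [Hm _]]]. rewrite !plus_INR. apply Hm; auto.
Qed.

Lemma adj_u_lt u v : adj u v -> (fst u < snd u)%nat.
Proof. destruct u as [p q], v as [r s]; unfold adj, farey_consecutive; simpl. nia. Qed.

Lemma adj_left u v : adj u v -> adj u (vadd u v).
Proof. destruct u as [p q], v as [r s]; unfold adj, farey_consecutive, vadd; simpl. nia. Qed.

Lemma adj_right u v : adj u v -> adj (vadd u v) v.
Proof. destruct u as [p q], v as [r s]; unfold adj, farey_consecutive, vadd; simpl. nia. Qed.

Lemma vadd_comm u v : vadd u v = vadd v u.
Proof. destruct u, v; unfold vadd; simpl; f_equal; lia. Qed.

Lemma adjo_left b u v : adjo b u v -> adjo b u (vadd u v).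
Proof. destruct b; simpl. apply adj_left. intro H; rewrite vadd_comm; now apply adj_right. Qed.

Lemma adjo_right b u v : adjo b u v -> adjo b (vadd u v) v.
Proof. destruct b; simpl. apply adj_right. intro H; rewrite vadd_comm; now apply adj_left. Qed.

Lemma adjo_step g (Hg: is_DTU lam g) b u v : adjo b u v ->
  g(vl(vadd u v)) - g(vl u) = mu b * (g (vl v) - g(vl u)).
Proof.
  destruct b; simpl; intro H.
  - rewrite (med g Hg u v H). ring.
  - rewrite vadd_comm, (med g Hg v u H). ring.
Qed.

Lemma adj_len u v : adj u v -> vl v - vl u = / (INR(snd u) * INR(snd v)).
Proof.
  destruct u as [p q], v as [r s]; unfold adj, farey_consecutive, vl; simpl.
  intros [H1 [H2 [H3 H4]]].
  apply lt_0_INR in H1; apply lt_0_INR in H2.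
  assert (E: INR r * INR q = INR p * INR s + 1).
  { rewrite <- !mult_INR. rewrite H4, plus_INR. simpl. ring. }
  field_simplify_eq; try lra.
Qed.

Lemma adj_lt u v : adj u v -> vl u < vl v.
Proof.
  intro H. pose proof (adj_len u v H). destruct u as [p q], v as [r s].
  destruct H as [H1 [H2 _]]. simpl in *. apply lt_0_INR in H1; apply lt_0_INR in H2.
  assert (0 < / (INR q * INR s)) by (apply Rinv_0_lt_compat; nra). lra.
Qed.

Lemma vl_range u : (0<snd u)%nat -> (fst u <= snd u)%nat -> 0 <= vl u <= 1.
Proof.
  destruct u as [p q]; unfold vl; simpl; intros H1 H2.
  apply le_INR in H2. apply lt_0_INR in H1. pose proof (pos_INR p).
  split. apply Rdiv_le_0_compat; lra.
  apply Rmult_le_reg_r with (INR q); auto. field_simplify; lra.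
Qed.

Lemma adj_range u v : adj u v -> (0 <= vl u <= 1) /\ (0 <= vl v <= 1).
Proof.
  intro H. pose proof (adj_u_lt u v H). destruct u as [p q], v as [r s].
  destruct H as [H1 [H2 [H3 _]]]. simpl in *. split; apply vl_range; simpl; lia.
Qed.

Lemma adjo_range b u v : adjo b u v -> (0 <= vl u <= 1) /\ (0 <= vl v <= 1).
Proof. destruct b; simpl; intro H; apply adj_range in H; tauto. Qed.

Fixpoint wk (u w : vec) (j : nat) : vec :=
  match j with O => w | S j => vadd u (wk u w j) end.

Lemma wk_adjo g (Hg: is_DTU lam g) b u w j : adjo b u w ->
  adjo b u (wk u w j) /\
  g (vl (wk u w j)) - g (vl u) = mu b ^ j * (g (vl w) - g (vl u)).
Proof.
  intro H. induction j as [|j [IH1 IH2]]; simpl.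
  - split; auto. ring.
  - split. now apply adjo_left.
    rewrite (adjo_step g Hg b u _ IH1), IH2. ring.
Qed.

Lemma wk_adjo2 b u w j : adjo b u w -> adjo b (wk u w (S j)) (wk u w j).
Proof.
  intro H. assert (H1: adjo b u (wk u w j)).
  { induction j; simpl; auto. now apply adjo_left. }
  simpl. now apply adjo_right.
Qed.

Lemma ball_R (x e y : R) : ball x e y <-> Rabs (y - x) < e.
Proof. unfold ball; simpl; unfold AbsRing_ball, abs, minus, plus, opp; simpl. tauto. Qed.

Lemma cont_g g (Hg: is_DTU lam g) t : 0 <= t <= 1 -> forall eps, 0 < eps ->
  exists d, 0 < d /\ forall z, 0 <= z <= 1 -> Rabs (z - t) < d -> Rabs (g z - g t) < eps.
Proof.
  intros Ht eps He. destruct Hg as [_ [_ [_ Hc]]].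
  specialize (Hc t Ht). rewrite filterlim_locally in Hc.
  specialize (Hc (mkposreal eps He)). destruct Hc as [d Hd].
  exists d. split. apply cond_pos. intros z Hz Hzt.
  specialize (Hd z). rewrite ball_R in Hd. specialize (Hd Hzt Hz).
  rewrite ball_R in Hd. exact Hd.
Qed.

Fixpoint sb (y:R) (k:nat) : vec*vec :=
  match k with
  | O => ((0,1)%nat,(1,1)%nat)
  | S k => let (u,v) := sb y k in let m := vadd u v in
           if Rle_dec y (vl m) then (u,m) else (m,v)
  end.

Lemma vl01 : vl (0,1)%nat = 0 /\ vl (1,1)%nat = 1.
Proof. unfold vl; simpl; split; field. Qed.

Lemma sb_inv g (Hg: is_DTU lam g) y : 0 <= y <= 1 -> forall k,
  let (u,v) := sb y k in
  adj u v /\ vl u <= y <= vl v /\ (snd u + snd v >= k + 2)%nat /\ g (vl u) < g (vl v).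
Proof.
  intros Hy k. induction k as [|k IH]; simpl.
  - destruct vl01 as [E0 E1]. rewrite E0, E1.
    destruct Hg as [G0 [G1 _]]. rewrite G0, G1.
    split. repeat split; simpl; lia. split. lra. split. lia. lra.
  - destruct (sb y k) as [u v]. destruct IH as [Ha [Hl [Hs Hgv]]].
    pose proof (med g Hg u v Ha) as Em. pose proof lam_bounds as [Lb _].
    destruct (Rle_dec y (vl (vadd u v))) as [Hle|Hgt].
    + split. now apply adj_left. split. lra. split.
      destruct Ha as [H1 [H2 _]]. unfold vadd; simpl. lia. rewrite Em. assert (0 < lam * (g (vl v) - g (vl u))) by (apply Rmult_lt_0_compat; lra). assert (0 < (1-lam) * (g (vl v) - g (vl u))) by (apply Rmult_lt_0_compat; lra). lra.
    + apply Rnot_le_lt in Hgt. split. now apply adj_right. split. lra. split.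
      destruct Ha as [H1 [H2 _]]. unfold vadd; simpl. lia. rewrite Em. assert (0 < lam * (g (vl v) - g (vl u))) by (apply Rmult_lt_0_compat; lra). assert (0 < (1-lam) * (g (vl v) - g (vl u))) by (apply Rmult_lt_0_compat; lra). lra.
Qed.

Lemma sb_mono g (Hg: is_DTU lam g) y : 0 <= y <= 1 -> forall j k, (j <= k)%nat ->
  g (vl (fst (sb y j))) <= g (vl (fst (sb y k))) /\
  g (vl (snd (sb y k))) <= g (vl (snd (sb y j))).
Proof.
  intros Hy j k Hjk. induction Hjk. lra.
  pose proof (sb_inv g Hg y Hy m) as Hi. simpl.
  destruct (sb y m) as [u v]. destruct Hi as [Ha [Hl [Hs Hgv]]].
  pose proof (med g Hg u v Ha) as Em. pose proof lam_bounds as [Lb _].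
  simpl in IHHjk.
  assert (0 < lam * (g (vl v) - g (vl u))) by (apply Rmult_lt_0_compat; lra). assert (0 < (1-lam) * (g (vl v) - g (vl u))) by (apply Rmult_lt_0_compat; lra).
  destruct (Rle_dec y (vl (vadd u v))); simpl; rewrite ?Em; split; lra.
Qed.

Lemma sb_len g (Hg: is_DTU lam g) y : 0 <= y <= 1 -> forall k,
  vl (snd (sb y k)) - vl (fst (sb y k)) <= / INR (S k).
Proof.
  intros Hy k. pose proof (sb_inv g Hg y Hy k) as Hi.
  destruct (sb y k) as [u v]. destruct Hi as [Ha [Hl [Hs Hgv]]]. cbn [fst snd].
  rewrite (adj_len u v Ha). destruct u as [p q], v as [r s]. destruct Ha as [H1 [H2 _]].
  cbn [fst snd] in *. apply Rinv_le_contravar. apply lt_0_INR; lia.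
  rewrite <- mult_INR. apply le_INR. nia.
Qed.

Lemma small_inv e : 0 < e -> exists N, forall n, (n >= N)%nat -> / INR (S n) < e.
Proof.
  intros He. destruct (archimed_cor1 e He) as [N [H1 H2]]. exists N. intros n Hn.
  eapply Rle_lt_trans; [|apply H1]. apply Rinv_le_contravar. apply lt_0_INR; lia.
  apply le_INR; lia.
Qed.

Lemma sb_bracket g (Hg: is_DTU lam g) y : 0 <= y <= 1 -> forall k,
  g (vl (fst (sb y k))) <= g y <= g (vl (snd (sb y k))).
Proof.
  intros Hy k. split.
  - destruct (Rle_or_lt (g (vl (fst (sb y k)))) (g y)) as [H|H]; auto. exfalso.
    assert (Hep: 0 < g (vl (fst (sb y k))) - g y) by lra. destruct (cont_g g Hg y Hy _ Hep) as [d [Hd Hc]].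
    destruct (small_inv d Hd) as [N HN].
    set (j := max N k).
    pose proof (sb_len g Hg y Hy j) as Hlen. pose proof (HN j ltac:(lia)).
    pose proof (sb_inv g Hg y Hy j) as Hi. pose proof (sb_mono g Hg y Hy k j ltac:(lia)) as [Hm _].
    destruct (sb y j) as [u v] eqn:E. destruct Hi as [Ha [Hl _]]. simpl in *.
    destruct (adj_range u v Ha) as [Ru Rv].
    specialize (Hc (vl u) Ru). assert (Rabs (vl u - y) < d) by (rewrite Rabs_left1; lra).
    specialize (Hc H1). rewrite Rabs_lt_between in Hc. lra.
  - destruct (Rle_or_lt (g y) (g (vl (snd (sb y k))))) as [H|H]; auto. exfalso.
    assert (Hep: 0 < g y - g (vl (snd (sb y k)))) by lra. destruct (cont_g g Hg y Hy _ Hep) as [d [Hd Hc]].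
    destruct (small_inv d Hd) as [N HN].
    set (j := max N k).
    pose proof (sb_len g Hg y Hy j) as Hlen. pose proof (HN j ltac:(lia)).
    pose proof (sb_inv g Hg y Hy j) as Hi. pose proof (sb_mono g Hg y Hy k j ltac:(lia)) as [_ Hm].
    destruct (sb y j) as [u v] eqn:E. destruct Hi as [Ha [Hl _]]. simpl in *.
    destruct (adj_range u v Ha) as [Ru Rv].
    specialize (Hc (vl v) Rv). assert (Rabs (vl v - y) < d) by (rewrite Rabs_right; lra).
    specialize (Hc H1). rewrite Rabs_lt_between in Hc. lra.
Qed.

Lemma sb_sep g (Hg: is_DTU lam g) a b : 0 <= a -> a < b -> b <= 1 -> forall k,
  sb a k = sb b k \/ g a <= g b.
Proof.
  intros Ha Hab Hb k. induction k as [|k IH]. left; reflexivity.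
  destruct IH as [E|E]; [|right; exact E].
  pose proof (sb_bracket g Hg a ltac:(lra) (S k)) as A1.
  pose proof (sb_bracket g Hg b ltac:(lra) (S k)) as B1.
  simpl in A1, B1 |- *. rewrite E in A1 |- *. destruct (sb b k) as [u v].
  destruct (Rle_dec a (vl (vadd u v))) as [Q1|Q1], (Rle_dec b (vl (vadd u v))) as [Q2|Q2]; simpl in *; try apply Rnot_le_lt in Q1; try apply Rnot_le_lt in Q2.
  - left; reflexivity.
  - right. lra.
  - lra.
  - left; reflexivity.
Qed.

Lemma g_mono g (Hg: is_DTU lam g) a b : 0 <= a -> a <= b -> b <= 1 -> g a <= g b.
Proof.
  intros Ha Hab Hb. destruct (Req_dec a b) as [->|Hne]. lra.
  destruct (small_inv (b - a) ltac:(lra)) as [N HN].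
  destruct (sb_sep g Hg a b Ha ltac:(lra) Hb N) as [E|E]; auto.
  exfalso. pose proof (sb_len g Hg a ltac:(lra) N) as L. pose proof (HN N (le_n _)).
  pose proof (sb_inv g Hg a ltac:(lra) N) as Ia. pose proof (sb_inv g Hg b ltac:(lra) N) as Ib.
  rewrite E in L, Ia. destruct (sb b N) as [u v]. simpl in *. lra.
Qed.

Definition sc (c:nat) (u:vec) : vec := (c * fst u, c * snd u)%nat.
Fixpoint PPa (a:nat->nat) (k:nat) : vec*vec :=
  match k with
  | O => ((1,0)%nat,(0,1)%nat)
  | S k => let (B,A) := PPa a k in (A, vadd (sc (a k) A) B)
  end.
Definition Pm a n := snd (PPa a n).
Definition Pm1 a n := fst (PPa a n).
Definition W1 a n := vadd (Pm a n) (Pm1 a n).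

Lemma Pm_S a n : Pm a (S n) = vadd (sc (a n) (Pm a n)) (Pm1 a n).
Proof. unfold Pm, Pm1; simpl; destruct (PPa a n); reflexivity. Qed.
Lemma Pm1_S a n : Pm1 a (S n) = Pm a n.
Proof. unfold Pm, Pm1; simpl; destruct (PPa a n); reflexivity. Qed.

Lemma even_S n : Nat.even (S n) = negb (Nat.even n).
Proof. rewrite Nat.even_succ, <- Nat.negb_even. reflexivity. Qed.

Lemma struct a (Ha : forall k, (1 <= a k)%nat) n :
  let (p,q) := Pm a n in let (p',q') := Pm1 a n in
  (0<q /\ p <= q /\ p+p' <= q+q' /\ q' <= q /\
  (if Nat.even n then p'*q = p*q' + 1 else p*q' = p'*q + 1))%nat.
Proof.
  induction n as [|n IH]. simpl. lia.
  rewrite Pm_S, Pm1_S, even_S. specialize (Ha n).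
  destruct (Pm a n) as [p q], (Pm1 a n) as [p' q']. unfold vadd, sc; simpl.
  destruct (Nat.even n); simpl; nia.
Qed.

Lemma level_adjo a (Ha : forall k, (1 <= a k)%nat) n :
  adjo (Nat.even n) (Pm a n) (W1 a n).
Proof.
  pose proof (struct a Ha n) as H. unfold W1.
  destruct (Pm a n) as [p q], (Pm1 a n) as [p' q'].
  destruct (Nat.even n); unfold adjo, adj, farey_consecutive, vadd; simpl; nia.
Qed.

Lemma wk_form u u' j : wk u (vadd u u') j = vadd (sc (S j) u) u'.
Proof.
  induction j; simpl; rewrite ?IHj; destruct u, u'; unfold vadd, sc; simpl; f_equal; lia.
Qed.

Lemma P_S_wk a (Ha : forall k, (1 <= a k)%nat) m :
  Pm a (S m) = wk (Pm a m) (W1 a m) (a m - 1).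
Proof.
  unfold W1. rewrite wk_form, Pm_S. specialize (Ha m).
  replace (S (a m - 1)) with (a m) by lia. reflexivity.
Qed.

Lemma W_S_wk a (Ha : forall k, (1 <= a k)%nat) m :
  W1 a (S m) = wk (Pm a m) (W1 a m) (a m).
Proof.
  unfold W1 at 1 2. rewrite wk_form, Pm_S, Pm1_S.
  destruct (Pm a m), (Pm1 a m); unfold vadd, sc; simpl; f_equal; lia.
Qed.

Definition lo a n := if Nat.even n then vl (Pm a n) else vl (W1 a n).
Definition hi a n := if Nat.even n then vl (W1 a n) else vl (Pm a n).
Definition qs a n := INR (snd (Pm a n)) * INR (snd (W1 a n)).
Definition Dsg (g : R -> R) a n := g (vl (W1 a n)) - g (vl (Pm a n)).

Lemma adjo_len b u v : adjo b u v -> Rabs (vl v - vl u) = / (INR (snd u) * INR (snd v)).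
Proof.
  destruct b; simpl; intro H; pose proof (adj_len _ _ H); pose proof (adj_lt _ _ H).
  - rewrite Rabs_right by lra. auto.
  - rewrite Rabs_left by lra. rewrite Rmult_comm. lra.
Qed.

Lemma lo_hi_len a (Ha : forall k, (1 <= a k)%nat) n : hi a n - lo a n = / qs a n.
Proof.
  pose proof (level_adjo a Ha n) as H. unfold hi, lo, qs.
  destruct (Nat.even n); simpl in H.
  - now apply adj_len.
  - rewrite (adj_len _ _ H). rewrite Rmult_comm. reflexivity.
Qed.

Lemma lo_lt_hi a (Ha : forall k, (1 <= a k)%nat) n : lo a n < hi a n.
Proof.
  pose proof (level_adjo a Ha n) as H. unfold hi, lo.
  destruct (Nat.even n); simpl in H; now apply adj_lt.
Qed.

Lemma lohi_range a (Ha : forall k, (1 <= a k)%nat) n :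
  0 <= lo a n /\ hi a n <= 1.
Proof.
  pose proof (level_adjo a Ha n) as H. unfold hi, lo.
  destruct (Nat.even n); simpl in H; apply adj_range in H; lra.
Qed.

Lemma wk_chain b u w : adjo b u w -> forall i j, (i <= j)%nat ->
  if b then vl (wk u w j) <= vl (wk u w i) else vl (wk u w i) <= vl (wk u w j).
Proof.
  intros H i j Hij. induction Hij. destruct b; lra.
  pose proof (wk_adjo2 b u w m H) as H2.
  destruct b; cbn [adjo] in H2 |- *; apply adj_lt in H2; lra.
Qed.

Definition tt x n := Nat.iter n gauss x.
Definition ax x n := Z.to_nat (pq x n).

Lemma frac_step t : 0 < t < 1 ->
  (1 <= Int_part (/t))%Z /\ 0 <= / t - IZR (Int_part (/ t)) < 1 /\
  INR (Z.to_nat (Int_part (/t))) = IZR (Int_part (/t)).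
Proof.
  intros Ht. destruct (base_Int_part (/t)) as [H1 H2].
  assert (1 < / t). { rewrite <- Rinv_1. apply Rinv_lt_contravar; lra. }
  assert (Hz: (0 < Int_part (/t))%Z). { apply lt_IZR. lra. }
  split. lia. split. lra.
  rewrite INR_IZR_INZ, Z2Nat.id by lia. reflexivity.
Qed.

Lemma cf x : 0 <= x <= 1 -> irrational x -> forall n,
  0 < tt x n < 1 /\
  let (p,q) := Pm (ax x) n in let (p',q') := Pm1 (ax x) n in
  (0 < q)%nat /\ x = (INR p + tt x n * INR p')/(INR q + tt x n * INR q').
Proof.
  intros Hx Hirr.
  assert (Hx0 : x <> 0). { intro E. apply (Hirr 0%Z 1%Z); [lia|]. rewrite E. simpl. field. }
  assert (Hx1 : x <> 1). { intro E. apply (Hirr 1%Z 1%Z); [lia|]. rewrite E. simpl. field. }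
  induction n as [|n [Ht IH]].
  - simpl. split. unfold tt; simpl; lra. split. lia. field.
  - rewrite Pm_S, Pm1_S.
    destruct (frac_step _ Ht) as [Z1 [Z2 Z3]].
    unfold ax at 1. fold (tt x n). unfold pq. fold (tt x n).
    set (z := Int_part (/ tt x n)) in *.
    assert (Ett : tt x (S n) = / tt x n - IZR z) by reflexivity.
    rewrite Ett. set (t' := / tt x n - IZR z) in *.
    assert (Htt : tt x n = / (IZR z + t')).
    { unfold t'. rewrite Rplus_minus. rewrite Rinv_inv. reflexivity. }
    destruct (Pm (ax x) n) as [p q], (Pm1 (ax x) n) as [p' q'].
    destruct IH as [Hq Ex]. unfold vadd, sc; simpl fst; simpl snd.
    rewrite !plus_INR, !mult_INR, Z3.
    assert (Hz : 1 <= IZR z) by (apply IZR_le; lia).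
    pose proof Hq as Hqn. apply lt_0_INR in Hq. pose proof (pos_INR p'). pose proof (pos_INR q'). pose proof (pos_INR p).
    assert (Ex2 : x = (IZR z * INR p + INR p' + t' * INR p) / (IZR z * INR q + INR q' + t' * INR q)).
    { rewrite Ex, Htt. field. split; nra. }
    assert (Ht0 : t' <> 0).
    { intro E0. rewrite E0 in Ex2.
      apply (Hirr (Z.of_nat (Z.to_nat z * p + p')) (Z.of_nat (Z.to_nat z * q + q'))).
      + intro E1. assert (E2 : (Z.to_nat z * q + q' = 0)%nat) by lia.
        apply (f_equal INR) in E2. rewrite plus_INR, mult_INR, Z3 in E2. simpl in E2. nra.
      + rewrite <- !INR_IZR_INZ, !plus_INR, !mult_INR, Z3. rewrite Ex2. f_equal; ring. }
    split. lra. split.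
    + assert (0 < Z.to_nat z)%nat by lia. nia.
    + exact Ex2.
Qed.

Lemma ax_ge1 x : 0 <= x <= 1 -> irrational x -> forall n, (1 <= ax x n)%nat.
Proof.
  intros Hx Hi n. destruct (cf x Hx Hi n) as [Ht _].
  destruct (frac_step _ Ht) as [Z1 _]. unfold ax, pq. fold (tt x n). lia.
Qed.

Lemma frac_lt a b c d : 0 < b -> 0 < d -> a * d < c * b -> a / b < c / d.
Proof.
  intros Hb Hd H. apply Rminus_lt. replace (a / b - c / d) with ((a*d - c*b) / (b*d)) by (field; lra).
  apply Rdiv_neg_pos. lra. nra.
Qed.

Lemma x_lohi x (Hx : 0 <= x <= 1) (Hi : irrational x) n :
  lo (ax x) n < x < hi (ax x) n.
Proof.
  pose proof (ax_ge1 x Hx Hi) as Ha.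
  destruct (cf x Hx Hi n) as [Ht Hc]. pose proof (struct _ Ha n) as Hs.
  unfold lo, hi, W1. set (t := tt x n) in *.
  destruct (Pm (ax x) n) as [p q], (Pm1 (ax x) n) as [p' q'].
  destruct Hc as [Hq Ex]. destruct Hs as [_ [_ [_ [_ Hd]]]].
  unfold vl, vadd; simpl fst; simpl snd. rewrite !plus_INR.
  apply lt_0_INR in Hq. pose proof (pos_INR q'). rewrite Ex.
  destruct (Nat.even n).
  - apply (f_equal INR) in Hd. rewrite !plus_INR, !mult_INR in Hd. simpl in Hd.
    split; apply frac_lt; nra.
  - apply (f_equal INR) in Hd. rewrite !plus_INR, !mult_INR in Hd. simpl in Hd.
    split; apply frac_lt; nra.
Qed.

Lemma gwk g (Hg : is_DTU lam g) a (Ha : forall k, (1 <= a k)%nat) m j :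
  adjo (Nat.even m) (Pm a m) (wk (Pm a m) (W1 a m) j) /\
  g (vl (wk (Pm a m) (W1 a m) j)) - g (vl (Pm a m)) = mu (Nat.even m) ^ j * Dsg g a m.
Proof. apply (wk_adjo g Hg). now apply level_adjo. Qed.

Lemma lo_S a (Ha : forall k, (1 <= a k)%nat) m :
  lo a (S m) = if Nat.even m then vl (wk (Pm a m) (W1 a m) (a m))
               else vl (wk (Pm a m) (W1 a m) (a m - 1)).
Proof.
  unfold lo. rewrite even_S, (W_S_wk a Ha), (P_S_wk a Ha). destruct (Nat.even m); reflexivity.
Qed.

Lemma hi_S a (Ha : forall k, (1 <= a k)%nat) m :
  hi a (S m) = if Nat.even m then vl (wk (Pm a m) (W1 a m) (a m - 1))
               else vl (wk (Pm a m) (W1 a m) (a m)).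
Proof.
  unfold hi. rewrite even_S, (W_S_wk a Ha), (P_S_wk a Ha). destruct (Nat.even m); reflexivity.
Qed.

Lemma Dsg_S g (Hg : is_DTU lam g) a (Ha : forall k, (1 <= a k)%nat) m :
  Dsg g a (S m) = (mu (Nat.even m) ^ a m - mu (Nat.even m) ^ (a m - 1)) * Dsg g a m.
Proof.
  unfold Dsg at 1. rewrite (W_S_wk a Ha), (P_S_wk a Ha).
  destruct (gwk g Hg a Ha m (a m)) as [_ E1]. destruct (gwk g Hg a Ha m (a m - 1)) as [_ E2].
  lra.
Qed.

Lemma Dsg_sign g (Hg : is_DTU lam g) a (Ha : forall k, (1 <= a k)%nat) m :
  if Nat.even m then 0 <= Dsg g a m else Dsg g a m <= 0.
Proof.
  pose proof (level_adjo a Ha m) as H. unfold Dsg.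
  destruct (Nat.even m); simpl in H; pose proof (adj_lt _ _ H) as Hl;
  destruct (adj_range _ _ H) as [R1 R2].
  - pose proof (g_mono g Hg (vl (Pm a m)) (vl (W1 a m))). lra.
  - pose proof (g_mono g Hg (vl (W1 a m)) (vl (Pm a m))). lra.
Qed.

Lemma mu_bounds b : lam * lam <= mu b <= lam /\ lam * lam <= 1 - mu b <= lam.
Proof. destruct lam_bounds as [L E]. destruct b; simpl; nra. Qed.

Lemma Dm_S g (Hg : is_DTU lam g) a (Ha : forall k, (1 <= a k)%nat) m :
  Rabs (Dsg g a (S m)) = mu (Nat.even m) ^ (a m - 1) * (1 - mu (Nat.even m)) * Rabs (Dsg g a m).
Proof.
  rewrite (Dsg_S g Hg a Ha m). specialize (Ha m).
  replace (a m) with (S (a m - 1)) at 1 by lia. simpl pow.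
  replace ((mu (Nat.even m) * mu (Nat.even m) ^ (a m - 1) - mu (Nat.even m) ^ (a m - 1)))
    with (- (mu (Nat.even m) ^ (a m - 1) * (1 - mu (Nat.even m)))) by ring.
  rewrite Rabs_mult, Rabs_Ropp, Rabs_right. reflexivity.
  destruct (mu_bounds (Nat.even m)) as [[M1 M2] [M3 M4]]. destruct lam_bounds as [L _].
  apply Rle_ge, Rmult_le_pos. apply pow_le. nra. nra.
Qed.

Lemma pow_lb b k : (k <= 3)%nat -> lam ^ 6 <= mu b ^ k.
Proof.
  intros Hk. destruct (mu_bounds b) as [[M1 M2] _]. destruct lam_bounds as [L _].
  assert (0 < mu b) by nra. assert (mu b <= 1) by lra.
  assert (lam^6 <= mu b ^ 3).
  { apply Rle_trans with ((lam*lam)^3). right; ring. apply pow_incr; nra. }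
  assert (mu b ^ 3 <= mu b ^ 2) by (simpl; nra).
  assert (mu b ^ 2 <= mu b) by (simpl; nra).
  destruct k as [|[|[|[|k]]]]; simpl in *; try lia; nra.
Qed.

Lemma Dm_S_lb g (Hg : is_DTU lam g) a (Ha : forall k, (1 <= a k)%nat) (Hb : forall k, (a k <= 3)%nat) m :
  lam ^ 8 * Rabs (Dsg g a m) <= Rabs (Dsg g a (S m)).
Proof.
  rewrite (Dm_S g Hg a Ha m). pose proof (pow_lb (Nat.even m) (a m - 1) ltac:(specialize (Hb m); lia)).
  destruct (mu_bounds (Nat.even m)) as [_ [M3 M4]]. destruct lam_bounds as [L _].
  pose proof (Rabs_pos (Dsg g a m)).
  apply Rmult_le_compat_r; auto. replace (lam ^ 8) with (lam^6 * (lam*lam)) by ring.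
  apply Rmult_le_compat; try nra.
Qed.

Lemma snd_wk a m j :
  snd (wk (Pm a m) (W1 a m) j) = ((S j) * snd (Pm a m) + snd (Pm1 a m))%nat.
Proof. unfold W1. rewrite wk_form. reflexivity. Qed.

Lemma struct2 a (Ha : forall k, (1 <= a k)%nat) m :
  (0 < snd (Pm a m))%nat /\ (snd (Pm1 a m) <= snd (Pm a m))%nat.
Proof.
  pose proof (struct a Ha m) as H. destruct (Pm a m), (Pm1 a m). simpl. lia.
Qed.

Lemma len_lb a (Ha : forall k, (1 <= a k)%nat) m U V K : adj U V ->
  (snd U * snd V <= K * (snd (Pm a m) * snd (W1 a m)))%nat -> (0 < K)%nat ->
  / (INR K * qs a m) <= vl V - vl U.
Proof.
  intros H Hle HK. rewrite (adj_len U V H). unfold qs.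
  destruct H as [H1 [H2 _]].
  apply Rinv_le_contravar. apply Rmult_lt_0_compat; apply lt_0_INR; lia.
  rewrite <- !mult_INR. apply le_INR. exact Hle.
Qed.

Lemma snd_W1 a m : snd (W1 a m) = (snd (Pm a m) + snd (Pm1 a m))%nat.
Proof. reflexivity. Qed.

Lemma lam_pows : 0 < lam ^ 8 /\ lam ^ 8 <= lam ^ 7 /\ lam ^ 7 <= lam ^ 6 /\ lam ^ 8 <= lam * lam.
Proof.
  destruct lam_bounds as [L _].
  assert (0 < lam ^ 6) by (apply pow_lt; lra).
  assert (lam ^ 6 <= 1) by (rewrite <- (pow1 6); apply pow_incr; lra).
  replace (lam ^ 8) with (lam ^ 6 * lam * lam) by ring.
  replace (lam ^ 7) with (lam ^ 6 * lam) by ring.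
  assert (0 < lam ^ 6 * lam) by nra.
  repeat split; nra.
Qed.

Lemma right_gap g (Hg : is_DTU lam g) a (Ha : forall k, (1 <= a k)%nat)
  (Hb : forall k, (a k <= 3)%nat) x (Hx : forall n, lo a n < x < hi a n) m :
  exists U V, adj U V /\ x < vl U /\ vl V <= hi a m /\
    lam ^ 8 * Rabs (Dsg g a m) <= g (vl V) - g (vl U) /\
    / (INR 12 * qs a m) <= vl V - vl U.
Proof.
  pose proof lam_pows as [LP0 [LP1 [LP2 LP3]]]. destruct lam_bounds as [L Lq].
  pose proof (Rabs_pos (Dsg g a m)) as Dpos.
  pose proof (Dsg_sign g Hg a Ha m) as Sg.
  destruct (struct2 a Ha m) as [Q1 Q2]. pose proof (snd_W1 a m) as QW.
  destruct (Nat.even m) eqn:Ev.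
  - destruct (Nat.eq_dec (a m) 1) as [A1|A2].
    +
      pose proof (Dsg_sign g Hg a Ha (S m)) as Sg2. rewrite even_S, Ev in Sg2. simpl in Sg2.
      destruct (gwk g Hg a Ha (S m) (a (S m))) as [Ad Eg]. rewrite even_S, Ev in Ad, Eg. simpl in Ad, Eg.
      exists (wk (Pm a (S m)) (W1 a (S m)) (a (S m))), (Pm a (S m)).
      assert (EP : Pm a (S m) = W1 a m).
      { rewrite (P_S_wk a Ha). rewrite A1. reflexivity. }
      split. exact Ad. split.
      { pose proof (hi_S a Ha (S m)) as H. rewrite even_S, Ev in H. simpl in H.
        rewrite <- H. apply Hx. }
      split. { unfold hi. rewrite Ev, EP. lra. }
      split.
      { pose proof (Dm_S g Hg a Ha m) as DS. rewrite Ev, A1 in DS. simpl in DS.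
        rewrite Rabs_left1 in DS by lra.
        pose proof (pow_lb false (a (S m)) (Hb _)) as PL. simpl mu in PL.
        assert (g (vl (Pm a (S m))) - g (vl (wk (Pm a (S m)) (W1 a (S m)) (a (S m)))) =
                (1 - lam) ^ a (S m) * (1 - lam) * Rabs (Dsg g a m)) by nra.
        rewrite H. replace (lam ^ 8) with (lam ^ 6 * (lam*lam)) by ring.
        apply Rmult_le_compat_r; auto. apply Rmult_le_compat.
        apply pow_le; lra. nra. exact PL. lra. }
      { apply (len_lb a Ha m); [exact Ad| |lia].
        rewrite snd_wk, Pm1_S, EP, QW.
        specialize (Hb (S m)). nia. }
    + destruct (gwk g Hg a Ha m 1) as [_ Eg]. rewrite Ev in Eg. simpl in Eg.
      pose proof (wk_adjo2 (Nat.even m) _ _ 0 (level_adjo a Ha m)) as Ad. rewrite Ev in Ad. simpl in Ad.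
      exists (wk (Pm a m) (W1 a m) 1), (W1 a m).
      split. exact Ad. split.
      { pose proof (hi_S a Ha m) as H. rewrite Ev in H.
        assert (Hadj : adjo true (Pm a m) (W1 a m)) by (rewrite <- Ev; apply level_adjo; auto).
        assert (Hle : (1 <= a m - 1)%nat) by (specialize (Ha m); lia).
        pose proof (wk_chain true _ _ Hadj 1 (a m - 1) Hle) as C. cbn iota in C.
        specialize (Hx (S m)). lra. }
      split. { unfold hi. rewrite Ev. lra. }
      split.
      { rewrite Rabs_right by lra.
        assert (g (vl (W1 a m)) - g (vl (wk (Pm a m) (W1 a m) 1)) = (1 - lam) * Dsg g a m).
        { revert Eg. unfold Dsg. intro Eg. simpl wk. nra. }
        rewrite H. apply Rmult_le_compat_r. lra. lra. }
      { apply (len_lb a Ha m); [exact Ad| |lia]. rewrite snd_wk, QW. nia. }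
  - pose proof (gwk g Hg a Ha m (a m)) as [Ad Eg]. rewrite Ev in Ad, Eg. simpl in Ad, Eg.
    exists (wk (Pm a m) (W1 a m) (a m)), (Pm a m).
    split. exact Ad. split.
    { pose proof (hi_S a Ha m) as H. rewrite Ev in H. rewrite <- H. apply Hx. }
    split. { unfold hi. rewrite Ev. lra. }
    split.
    { rewrite Rabs_left1 by lra. pose proof (pow_lb false (a m) (Hb _)) as PL. simpl mu in PL.
      assert (g (vl (Pm a m)) - g (vl (wk (Pm a m) (W1 a m) (a m))) = (1 - lam) ^ a m * (- Dsg g a m)) by lra.
      rewrite H. apply Rmult_le_compat_r. lra. lra. }
    { apply (len_lb a Ha m); [exact Ad| |lia]. rewrite snd_wk, QW. specialize (Hb m). nia. }
Qed.

Lemma left_gap g (Hg : is_DTU lam g) a (Ha : forall k, (1 <= a k)%nat)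
  (Hb : forall k, (a k <= 3)%nat) x (Hx : forall n, lo a n < x < hi a n) m :
  exists U V, adj U V /\ lo a m <= vl U /\ vl V < x /\
    lam ^ 8 * Rabs (Dsg g a m) <= g (vl V) - g (vl U) /\
    / (INR 12 * qs a m) <= vl V - vl U.
Proof.
  pose proof lam_pows as [LP0 [LP1 [LP2 LP3]]]. destruct lam_bounds as [L Lq].
  pose proof (Rabs_pos (Dsg g a m)) as Dpos.
  pose proof (Dsg_sign g Hg a Ha m) as Sg.
  destruct (struct2 a Ha m) as [Q1 Q2]. pose proof (snd_W1 a m) as QW.
  destruct (Nat.even m) eqn:Ev.
  - pose proof (gwk g Hg a Ha m (a m)) as [Ad Eg]. rewrite Ev in Ad, Eg. cbn [adjo mu] in Ad, Eg.
    exists (Pm a m), (wk (Pm a m) (W1 a m) (a m)).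
    split. exact Ad. split.
    { unfold lo. rewrite Ev. lra. }
    split. { pose proof (lo_S a Ha m) as H. rewrite Ev in H. rewrite <- H. apply Hx. }
    split.
    { rewrite Rabs_right by lra. pose proof (pow_lb true (a m) (Hb _)) as PL. cbn [mu] in PL.
      rewrite Eg. apply Rmult_le_compat_r. lra. lra. }
    { apply (len_lb a Ha m); [exact Ad| |lia]. rewrite snd_wk, QW. specialize (Hb m). nia. }
  - destruct (Nat.eq_dec (a m) 1) as [A1|A2].
    + pose proof (Dsg_sign g Hg a Ha (S m)) as Sg2. rewrite even_S, Ev in Sg2. cbn [negb] in Sg2.
      destruct (gwk g Hg a Ha (S m) (a (S m))) as [Ad Eg]. rewrite even_S, Ev in Ad, Eg. cbn [negb adjo mu] in Ad, Eg.
      exists (Pm a (S m)), (wk (Pm a (S m)) (W1 a (S m)) (a (S m))).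
      assert (EP : Pm a (S m) = W1 a m).
      { rewrite (P_S_wk a Ha). rewrite A1. reflexivity. }
      split. exact Ad. split.
      { unfold lo. rewrite Ev, EP. lra. }
      split.
      { pose proof (lo_S a Ha (S m)) as H. rewrite even_S, Ev in H. cbn [negb] in H.
        rewrite <- H. apply Hx. }
      split.
      { pose proof (Dm_S g Hg a Ha m) as DS. rewrite Ev, A1 in DS. cbn [mu] in DS.
        replace (1 - 1)%nat with 0%nat in DS by lia. rewrite pow_O in DS.
        rewrite Rabs_right in DS by lra.
        pose proof (pow_lb true (a (S m)) (Hb _)) as PL. cbn [mu] in PL.
        rewrite Eg, DS. replace (lam ^ 8) with (lam ^ 6 * (lam*lam)) by ring.
        replace (1 * (1 - (1 - lam)) * Rabs (Dsg g a m)) with (lam * Rabs (Dsg g a m)) by ring.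
        assert (K: lam^6*(lam*lam) <= lam^a (S m) * lam) by (apply Rmult_le_compat; [apply pow_le; lra | nra | exact PL | nra]).
        rewrite <- (Rmult_assoc (lam ^ a (S m))). apply Rmult_le_compat_r; auto. }
      { apply (len_lb a Ha m); [exact Ad| |lia].
        rewrite snd_wk, Pm1_S, EP, QW.
        specialize (Hb (S m)). nia. }
    + destruct (gwk g Hg a Ha m 1) as [_ Eg]. rewrite Ev in Eg. cbn [mu] in Eg.
      pose proof (wk_adjo2 (Nat.even m) _ _ 0 (level_adjo a Ha m)) as Ad. rewrite Ev in Ad. cbn [adjo] in Ad.
      exists (W1 a m), (wk (Pm a m) (W1 a m) 1).
      split. exact Ad. split.
      { unfold lo. rewrite Ev. lra. }
      split.
      { pose proof (lo_S a Ha m) as H. rewrite Ev in H.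
        assert (Hadj : adjo false (Pm a m) (W1 a m)) by (rewrite <- Ev; apply level_adjo; auto).
        assert (Hle : (1 <= a m - 1)%nat) by (specialize (Ha m); lia).
        pose proof (wk_chain false _ _ Hadj 1 (a m - 1) Hle) as C. cbn iota in C.
        specialize (Hx (S m)). lra. }
      split.
      { rewrite Rabs_left1 by lra.
        assert (g (vl (wk (Pm a m) (W1 a m) 1)) - g (vl (W1 a m)) = lam * (- Dsg g a m)).
        { revert Eg. unfold Dsg. intro Eg. simpl wk in *. simpl pow in Eg. nra. }
        rewrite H. apply Rmult_le_compat_r. lra. nra. }
      { apply (len_lb a Ha m); [exact Ad| |lia]. rewrite snd_wk, QW. nia. }
Qed.

Lemma qs_S_le a (Ha : forall k, (1 <= a k)%nat) (Hb : forall k, (a k <= 3)%nat) n :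
  qs a (S n) <= INR 20 * qs a n.
Proof.
  unfold qs. rewrite !snd_W1, Pm_S, Pm1_S. destruct (struct2 a Ha n) as [Q1 Q2].
  specialize (Hb n). unfold vadd, sc; simpl fst; simpl snd.
  rewrite <- !mult_INR. apply le_INR. nia.
Qed.

Lemma qs_ge a (Ha : forall k, (1 <= a k)%nat) n : INR (S n) <= qs a n.
Proof.
  unfold qs. rewrite <- mult_INR. apply le_INR.
  induction n as [|n IH]. simpl. lia.
  rewrite !snd_W1 in *. rewrite Pm_S, Pm1_S. destruct (struct2 a Ha n) as [Q1 Q2].
  specialize (Ha n). unfold vadd, sc; simpl fst; simpl snd. nia.
Qed.

Lemma qs_pos a (Ha : forall k, (1 <= a k)%nat) n : 0 < qs a n.
Proof. pose proof (qs_ge a Ha n). pose proof (pos_INR n). rewrite S_INR in H. lra. Qed.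

Definition inI a n z := lo a n <= z <= hi a n.

Lemma exit_level a (Ha : forall k, (1 <= a k)%nat) x (Hx : forall n, lo a n < x < hi a n)
  N z : inI a N z -> z <> x ->
  exists n, (n >= N)%nat /\ inI a n z /\ ~ inI a (S n) z.
Proof.
  intros HN Hz.
  destruct (small_inv (Rabs (z - x))) as [K HK]. { apply Rabs_pos_lt. lra. }
  assert (Hout : ~ inI a (N + K) z).
  { intros [H1 H2]. specialize (HK (N+K)%nat ltac:(lia)). pose proof (lo_hi_len a Ha (N+K)).
    pose proof (qs_ge a Ha (N+K)). pose proof (Hx (N+K)%nat).
    assert (Rabs (z - x) <= / qs a (N+K)) by (apply Rabs_le; lra).
    assert (/ qs a (N+K) <= / INR (S (N+K))).
    { apply Rinv_le_contravar; auto. apply lt_0_INR; lia. }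
    lra. }
  clear HK. induction K as [|K IH].
  - rewrite Nat.add_0_r in Hout. contradiction.
  - destruct (classic (inI a (N + K) z)) as [Hin|Hnin].
    + exists (N+K)%nat. split. lia. split. auto. now rewrite <- Nat.add_succ_r.
    + now apply IH.
Qed.

Lemma core g (Hg : is_DTU lam g) a (Ha : forall k, (1 <= a k)%nat)
  (Hb : forall k, (a k <= 3)%nat) x (Hx : forall n, lo a n < x < hi a n) n h :
  inI a n (x + h) -> ~ inI a (S n) (x + h) -> h <> 0 ->
  lam ^ 16 * Rabs (Dsg g a n) * qs a n <= (g (x + h) - g x) / h /\
  0 <= (g (x + h) - g x) / h <= INR 240 * Rabs (Dsg g a n) * qs a n.
Proof.
  intros Hin Hout Hh.
  pose proof (Hx n) as Xn. pose proof (Hx (S n)) as XSn.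
  pose proof (lohi_range a Ha n) as Rn. pose proof (lo_hi_len a Ha n) as Ln.
  pose proof (qs_pos a Ha n) as Qp. pose proof (qs_pos a Ha (S n)) as QSp.
  pose proof (qs_S_le a Ha Hb n) as QS.
  pose proof (Dm_S_lb g Hg a Ha Hb n) as DL.
  pose proof (Rabs_pos (Dsg g a n)) as D0.
  assert (Dhl : g (hi a n) - g (lo a n) = Rabs (Dsg g a n)).
  { pose proof (Dsg_sign g Hg a Ha n) as S. unfold hi, lo, Dsg in *.
    destruct (Nat.even n). rewrite Rabs_right; lra. rewrite Rabs_left1; lra. }
  destruct Hin as [H1 H2].
  assert (Mx1 : g (lo a n) <= g x) by (apply (g_mono g Hg); lra).
  assert (Mx2 : g x <= g (hi a n)) by (apply (g_mono g Hg); lra).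
  assert (My1 : g (lo a n) <= g (x+h)) by (apply (g_mono g Hg); lra).
  assert (My2 : g (x+h) <= g (hi a n)) by (apply (g_mono g Hg); lra).
  assert (L8 : 0 < lam ^ 8) by (apply lam_pows).
  assert (Lpos : 0 < lam) by (destruct lam_bounds; lra).
  assert (E16 : lam ^ 16 = lam ^ 8 * lam ^ 8) by ring.
  assert (I20 : INR 240 = INR 12 * INR 20) by (rewrite <- mult_INR; reflexivity).
  assert (I12 : 0 < INR 12) by (apply lt_0_INR; lia).
  assert (I20p : 0 < INR 20) by (apply lt_0_INR; lia).
  assert (G0 : 0 <= lam ^ 16 * Rabs (Dsg g a n)) by (apply Rmult_le_pos; [apply pow_le; lra | lra]).
  destruct (Rlt_or_le 0 h) as [Hp|Hneg].
  - assert (Hr : hi a (S n) < x + h).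
    { destruct (Rle_or_lt (x+h) (hi a (S n))); auto. exfalso. apply Hout. split; lra. }
    destruct (right_gap g Hg a Ha Hb x Hx (S n)) as [U [V [Ad [U1 [V1 [GD LD]]]]]].
    destruct (adj_range U V Ad) as [RU RV]. pose proof (adj_lt U V Ad).
    assert (g x <= g (vl U)) by (apply (g_mono g Hg); lra).
    assert (g (vl V) <= g (x + h)) by (apply (g_mono g Hg); lra).
    assert (Gd : lam ^ 16 * Rabs (Dsg g a n) <= g (x+h) - g x).
    { rewrite E16, Rmult_assoc. apply Rle_trans with (lam ^ 8 * Rabs (Dsg g a (S n))).
      apply Rmult_le_compat_l; lra. lra. }
    assert (Hh1 : h <= / qs a n) by lra.
    assert (Hh2 : / (INR 240 * qs a n) <= h).
    { apply Rle_trans with (/ (INR 12 * qs a (S n))); [|lra].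
      apply Rinv_le_contravar. nra. rewrite I20, Rmult_assoc. apply Rmult_le_compat_l; lra. }
    split; [|split].
    + apply Rle_trans with ((g (x + h) - g x) * qs a n).
      apply Rmult_le_compat_r; lra.
      unfold Rdiv. apply Rmult_le_compat_l. lra.
      replace (qs a n) with (/ / qs a n) by (field; lra). apply Rinv_le_contravar; auto.
    + apply Rdiv_le_0_compat; lra.
    + apply Rle_trans with (Rabs (Dsg g a n) / h). unfold Rdiv. apply Rmult_le_compat_r.
      apply Rlt_le, Rinv_0_lt_compat; lra. lra.
      unfold Rdiv. rewrite Rmult_assoc, (Rmult_comm (INR 240)), Rmult_assoc. apply Rmult_le_compat_l; auto.
      replace (qs a n * INR 240) with (/ / (INR 240 * qs a n)) by (field; nra).
      apply Rinv_le_contravar; auto. apply Rinv_0_lt_compat; nra.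
  - assert (Hn' : h < 0) by (destruct Hneg as [Hq|Hq]; [exact Hq | contradiction]).
    assert (Hr : x + h < lo a (S n)).
    { destruct (Rle_or_lt (lo a (S n)) (x+h)); auto. exfalso. apply Hout. split; lra. }
    destruct (left_gap g Hg a Ha Hb x Hx (S n)) as [U [V [Ad [U1 [V1 [GD LD]]]]]].
    destruct (adj_range U V Ad) as [RU RV]. pose proof (adj_lt U V Ad).
    assert (g (vl V) <= g x) by (apply (g_mono g Hg); lra).
    assert (g (x + h) <= g (vl U)) by (apply (g_mono g Hg); lra).
    assert (Gd : lam ^ 16 * Rabs (Dsg g a n) <= g x - g (x+h)).
    { rewrite E16, Rmult_assoc. apply Rle_trans with (lam ^ 8 * Rabs (Dsg g a (S n))).
      apply Rmult_le_compat_l; lra. lra. }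
    assert (Hh1 : - h <= / qs a n) by lra.
    assert (Hh2 : / (INR 240 * qs a n) <= - h).
    { apply Rle_trans with (/ (INR 12 * qs a (S n))); [|lra].
      apply Rinv_le_contravar. nra. rewrite I20, Rmult_assoc. apply Rmult_le_compat_l; lra. }
    replace ((g (x + h) - g x) / h) with ((g x - g (x + h)) / (- h)) by (field; lra).
    split; [|split].
    + apply Rle_trans with ((g x - g (x + h)) * qs a n).
      apply Rmult_le_compat_r; lra.
      unfold Rdiv. apply Rmult_le_compat_l. lra.
      replace (qs a n) with (/ / qs a n) by (field; lra). apply Rinv_le_contravar; auto. lra.
    + apply Rdiv_le_0_compat; lra.
    + apply Rle_trans with (Rabs (Dsg g a n) / (- h)). unfold Rdiv. apply Rmult_le_compat_r.
      apply Rlt_le, Rinv_0_lt_compat; lra. lra.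
      unfold Rdiv. rewrite Rmult_assoc, (Rmult_comm (INR 240)), Rmult_assoc. apply Rmult_le_compat_l; auto.
      replace (qs a n * INR 240) with (/ / (INR 240 * qs a n)) by (field; nra).
      apply Rinv_le_contravar; auto. apply Rinv_0_lt_compat; nra.
Qed.

Definition Q g a n := Rabs (Dsg g a n) * qs a n.

Lemma Q0 g (Hg : is_DTU lam g) a : Q g a 0 = 1.
Proof.
  unfold Q, Dsg, qs, W1, Pm, Pm1. simpl. destruct vl01 as [E0 E1].
  replace (vl (1, 1)%nat) with (vl (1,1)%nat) by reflexivity.
  unfold vadd; simpl. rewrite E1, E0. destruct Hg as [G0 [G1 _]]. rewrite G0, G1.
  rewrite Rminus_0_r, Rabs_R1. ring.
Qed.

Lemma QS_eq g (Hg : is_DTU lam g) a (Ha : forall k, (1 <= a k)%nat) m :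
  Q g a (S m) = mu (Nat.even m) ^ (a m - 1) * (1 - mu (Nat.even m)) * Rabs (Dsg g a m) *
   (INR (a m) * INR (snd (Pm a m)) + INR (snd (Pm1 a m))) *
   (INR (a m) * INR (snd (Pm a m)) + INR (snd (Pm1 a m)) + INR (snd (Pm a m))).
Proof.
  unfold Q. rewrite (Dm_S g Hg a Ha m). unfold qs. rewrite snd_W1, Pm_S, Pm1_S.
  unfold vadd, sc; simpl fst; simpl snd. rewrite !plus_INR, !mult_INR. ring.
Qed.

Lemma Q_eq g a m : Q g a m = Rabs (Dsg g a m) *
   (INR (snd (Pm a m)) * (INR (snd (Pm a m)) + INR (snd (Pm1 a m)))).
Proof. unfold Q, qs. rewrite snd_W1, plus_INR. reflexivity. Qed.

Lemma lam_num : 0.236 <= lam * (1 - lam) /\ 0.0901 <= lam * (1-lam) * (1-lam)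
  /\ 0.1458 <= lam * lam * (1-lam) /\ 0.0557 <= lam * lam * (1-lam) * (1-lam)
  /\ 0.38196 <= 1 - lam.
Proof.
  destruct lam_bounds as [L E].
  assert (E2 : lam * lam = 1 - lam) by lra.
  assert (E3 : lam * (1 - lam) = 2 * lam - 1) by (rewrite <- E2; ring_simplify; rewrite ?E2; nra).
  assert (E4 : lam * lam * (1 - lam) = 2 - 3 * lam).
  { replace (lam * lam * (1 - lam)) with (lam * (lam * (1-lam))) by ring. rewrite E3. nra. }
  assert (E5 : lam * (1 - lam) * (1 - lam) = 5 * lam - 3).
  { rewrite E3. replace ((2 * lam - 1) * (1 - lam)) with (3*lam - 2 * (lam*lam) - 1) by ring. rewrite E2. ring. }
  assert (E6 : lam * lam * (1 - lam) * (1 - lam) = 5 - 8 * lam).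
  { rewrite E4. replace ((2 - 3 * lam) * (1 - lam)) with (2 - 5 * lam + 3 * (lam * lam)) by ring. rewrite E2. ring. }
  rewrite E6, E5, E4, E3. lra.
Qed.

Lemma QSS_eq g (Hg : is_DTU lam g) a (Ha : forall k, (1 <= a k)%nat) m (Ev : Nat.even m = true) :
  let q := INR (snd (Pm a m)) in let p := INR (snd (Pm1 a m)) in
  let A := INR (a m) in let B := INR (a (S m)) in
  Q g a (S (S m)) = ((1-lam)^(a (S m) - 1) * lam * (lam^(a m - 1) * (1-lam))) *
    (Rabs (Dsg g a m) * ((B * (A * q + p) + q) * (B * (A * q + p) + q + (A * q + p)))).
Proof.
  intros q p A B. rewrite (QS_eq g Hg a Ha (S m)), even_S, Ev. cbn [negb mu].
  rewrite (Dm_S g Hg a Ha m), Ev. cbn [mu]. rewrite Pm_S, Pm1_S.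
  unfold vadd, sc; simpl fst; simpl snd. rewrite !plus_INR, !mult_INR.
  fold q p A B. replace (1 - (1 - lam)) with lam by ring. ring.
Qed.

Lemma fin_ineq D K c X Y r : 0 <= D -> c <= K -> 0 <= Y -> r * X <= c * Y ->
  r * (D * X) <= K * (D * Y).
Proof.
  intros H1 H2 H3 H4.
  apply Rle_trans with (c * (D * Y)).
  replace (r * (D * X)) with (D * (r * X)) by ring. replace (c * (D * Y)) with (D * (c * Y)) by ring.
  apply Rmult_le_compat_l; auto.
  apply Rmult_le_compat_r; auto. apply Rmult_le_pos; auto.
Qed.

Lemma qp_facts a (Ha : forall k, (1 <= a k)%nat) m :
  1 <= INR (snd (Pm a m)) /\ 0 <= INR (snd (Pm1 a m)) <= INR (snd (Pm a m)).
Proof.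
  destruct (struct2 a Ha m) as [Q1 Q2]. split.
  replace 1 with (INR 1) by reflexivity. apply le_INR. lia.
  split. apply pos_INR. apply le_INR. lia.
Qed.

Lemma two_step_i g (Hg : is_DTU lam g) a (Ha : forall k, (1 <= a k)%nat) m
  (Ev : Nat.even m = true) (HA : (a m <= 2)%nat) (HB : (a (S m) <= 2)%nat) :
  1.05 * Q g a m <= Q g a (S (S m)).
Proof.
  rewrite (QSS_eq g Hg a Ha m Ev), Q_eq. cbv zeta.
  destruct (qp_facts a Ha m) as [Q1 [Q2 Q3]].
  set (q := INR (snd (Pm a m))) in *. set (p := INR (snd (Pm1 a m))) in *.
  pose proof (Rabs_pos (Dsg g a m)).
  destruct lam_num as [N1 [N2 [N3 [N4 N5]]]].
  pose proof (Ha m) as HA1. pose proof (Ha (S m)) as HB1.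
  assert (CA : a m = 1%nat \/ a m = 2%nat) by lia.
  assert (CB : a (S m) = 1%nat \/ a (S m) = 2%nat) by lia.
  destruct CA as [EA|EA]; destruct CB as [EB|EB]; rewrite EA, EB; simpl INR; simpl pow.
  - eapply fin_ineq with (c := 0.236); auto. lra. nra. nra.
  - eapply fin_ineq with (c := 0.0901); auto. lra. nra. nra.
  - eapply fin_ineq with (c := 0.1458); auto. lra. nra. nra.
  - eapply fin_ineq with (c := 0.0557); auto. lra. nra. nra.
Qed.

Lemma one_step_i g (Hg : is_DTU lam g) a (Ha : forall k, (1 <= a k)%nat) m
  (Ev : Nat.even m = true) (HA : (a m <= 2)%nat) :
  0.7 * Q g a m <= Q g a (S m).
Proof.
  rewrite (QS_eq g Hg a Ha m), Q_eq, Ev. cbn [mu].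
  destruct (qp_facts a Ha m) as [Q1 [Q2 Q3]].
  set (q := INR (snd (Pm a m))) in *. set (p := INR (snd (Pm1 a m))) in *.
  pose proof (Rabs_pos (Dsg g a m)).
  destruct lam_num as [N1 [N2 [N3 [N4 N5]]]]. destruct lam_bounds as [L E].
  pose proof (Ha m) as HA1.
  assert (CA : a m = 1%nat \/ a m = 2%nat) by lia.
  destruct CA as [EA|EA]; rewrite EA; simpl INR; simpl pow.
  - replace (1 * (1 - lam) * Rabs (Dsg g a m) * (1 * q + p) * (1 * q + p + q))
      with ((1 - lam) * (Rabs (Dsg g a m) * ((q + p) * (2 * q + p)))) by ring.
    apply fin_ineq with (c := 0.38196); [auto | lra | nra | nra].
  - replace (lam * 1 * (1 - lam) * Rabs (Dsg g a m) * ((1 + 1) * q + p) * ((1 + 1) * q + p + q))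
      with (lam * (1 - lam) * (Rabs (Dsg g a m) * ((2 * q + p) * (3 * q + p)))) by ring.
    apply fin_ineq with (c := 0.236); [auto | lra | nra | nra].
Qed.

Lemma even_double k : Nat.even (2 * k) = true.
Proof. rewrite Nat.even_mul. reflexivity. Qed.

Lemma bern k : 1 + 0.05 * INR k <= 1.05 ^ k.
Proof.
  induction k. simpl. lra. rewrite S_INR. simpl pow. pose proof (pos_INR k). nra.
Qed.

Lemma growth_i g (Hg : is_DTU lam g) a (Ha : forall k, (1 <= a k)%nat)
  (Hb : forall k, (a k <= 2)%nat) n :
  0.7 * (1 + 0.05 * INR (Nat.div2 n)) <= Q g a n.
Proof.
  assert (Hk : forall k, 1.05 ^ k <= Q g a (2 * k) /\ 0.7 * 1.05 ^ k <= Q g a (S (2 * k))).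
  { induction k as [|k [IH1 IH2]].
    - simpl. rewrite (Q0 g Hg a). split. lra.
      pose proof (one_step_i g Hg a Ha 0%nat eq_refl (Hb 0%nat)). rewrite (Q0 g Hg a) in H. lra.
    - assert (E : (2 * S k = S (S (2 * k)))%nat) by lia.
      pose proof (two_step_i g Hg a Ha (2*k) (even_double k) (Hb _) (Hb _)) as T.
      rewrite <- E in T.
      pose proof (one_step_i g Hg a Ha (2 * S k) (even_double _) (Hb _)) as O.
      simpl pow. split; nra. }
  destruct (Nat.Even_or_Odd n) as [[k ->]|[k ->]].
  - rewrite Nat.div2_double. destruct (Hk k). pose proof (bern k). pose proof (pow_le 1.05 k ltac:(lra)). lra.
  - rewrite Nat.add_1_r, Nat.div2_succ_double. destruct (Hk k). pose proof (bern k). lra.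
Qed.

Lemma nat_large r : exists N, forall n, (n >= N)%nat -> r < INR n.
Proof.
  destruct (Rle_or_lt r 0) as [H|H].
  - exists 1%nat. intros n Hn. apply Rle_lt_trans with 0; auto. apply lt_0_INR; lia.
  - destruct (small_inv (/ r)) as [N HN]. apply Rinv_0_lt_compat; auto.
    exists (S N). intros n Hn. specialize (HN (pred n) ltac:(lia)).
    replace (S (pred n)) with n in HN by lia.
    assert (0 < INR n) by (apply lt_0_INR; lia).
    destruct (Rlt_or_le r (INR n)) as [ok|bad]; auto. exfalso.
    pose proof (Rinv_le_contravar _ _ H0 bad). lra.
Qed.

Lemma nbhd_lemma a (Ha : forall k, (1 <= a k)%nat) x (Hx : forall n, lo a n < x < hi a n)
  (P : R -> Prop) N :
  (forall n h, (n >= N)%nat -> inI a n (x+h) -> ~ inI a (S n) (x+h) -> h <> 0 -> P h) ->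
  exists eps : posreal, forall h, Rabs h < eps -> h <> 0 -> P h.
Proof.
  intros HP. pose proof (Hx N) as [X1 X2].
  assert (Hd : 0 < Rmin (x - lo a N) (hi a N - x)) by (apply Rmin_glb_lt; lra).
  exists (mkposreal _ Hd). simpl. intros h Hh Hh0.
  pose proof (Rmin_l (x - lo a N) (hi a N - x)). pose proof (Rmin_r (x - lo a N) (hi a N - x)).
  apply Rabs_lt_between in Hh.
  destruct (exit_level a Ha x Hx N (x + h)) as [n [Hn [Hin Hout]]].
  split; lra. intro E. apply Hh0. lra.
  now apply (HP n h).
Qed.

Lemma part_i g (Hg : is_DTU lam g) x (Hx : 0 <= x <= 1) (Hi : irrational x)
  (H2 : forall n, (pq x n <= 2)%Z) :
  is_lim (fun h => (g (x + h) - g x) / h) 0 p_infty.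
Proof.
  set (a := ax x). pose proof (ax_ge1 x Hx Hi) as Ha.
  assert (Hb2 : forall k, (a k <= 2)%nat).
  { intro k. unfold a, ax. specialize (H2 k). lia. }
  assert (Hb3 : forall k, (a k <= 3)%nat) by (intro k; specialize (Hb2 k); lia).
  pose proof (x_lohi x Hx Hi) as Hxl. fold a in Hxl.
  apply is_lim_spec. intro M. simpl. unfold locally', within, locally.
  assert (L16 : 0 < lam ^ 16) by (apply pow_lt; destruct lam_bounds; lra).
  destruct (nat_large (M / (lam ^ 16 * 0.7 * 0.05))) as [K HK].
  destruct (nbhd_lemma a Ha x Hxl (fun h => M < (g (x + h) - g x) / h) (2 * K)) as [eps Heps].
  - intros n h Hn Hin Hout Hh0.
    destruct (core g Hg a Ha Hb3 x Hxl n h Hin Hout Hh0) as [C1 _].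
    pose proof (growth_i g Hg a Ha Hb2 n) as G. unfold Q in G.
    assert (Kn : (K <= Nat.div2 n)%nat) by (apply Nat.div2_le_lower_bound; lia).
    specialize (HK _ Kn).
    assert (M < lam ^ 16 * (0.7 * (1 + 0.05 * INR (Nat.div2 n)))).
    { apply Rmult_lt_compat_l with (r := lam ^ 16 * 0.7 * 0.05) in HK; [|nra].
      replace (lam ^ 16 * 0.7 * 0.05 * (M / (lam ^ 16 * 0.7 * 0.05))) with M in HK by (field; destruct lam_bounds; repeat split; apply Rgt_not_eq; lra).
      pose proof (pos_INR (Nat.div2 n)). nra. }
    assert (lam ^ 16 * (0.7 * (1 + 0.05 * INR (Nat.div2 n))) <= lam ^ 16 * (Rabs (Dsg g a n) * qs a n))
      by (apply Rmult_le_compat_l; lra).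
    lra.
  - exists eps. intros y Hy Hy0. apply Heps; auto.
    rewrite ball_R in Hy. rewrite Rminus_0_r in Hy. exact Hy.
Qed.

Definition y0 : R := (sqrt 21 - 3) / 2.
Definition z0 : R := (sqrt 21 - 3) / 6.

Lemma s21 : sqrt 21 * sqrt 21 = 21 /\ 4.58 < sqrt 21 < 4.59.
Proof.
  assert (H := sqrt_sqrt 21 ltac:(lra)). assert (H0 := sqrt_pos 21).
  split; auto. split; nra.
Qed.

Lemma y0_facts : 0 < y0 < 1 /\ 0 < z0 < 1 /\ / y0 = 1 + z0 /\ / z0 = 3 + y0.
Proof.
  destruct s21 as [E [B1 B2]]. unfold y0, z0.
  split. lra. split. lra. split.
  - field_simplify_eq; try (apply Rgt_not_eq; lra).
    replace (sqrt 21 ^ 2) with (sqrt 21 * sqrt 21) by ring. lra.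
  - field_simplify_eq; try (apply Rgt_not_eq; lra).
    replace (sqrt 21 ^ 2) with (sqrt 21 * sqrt 21) by ring. lra.
Qed.

Lemma Int_part_eq r k : IZR k <= r < IZR k + 1 -> Int_part r = k.
Proof.
  intros [H1 H2]. unfold Int_part.
  rewrite <- (tech_up r (k + 1)). ring.
  rewrite plus_IZR. simpl. lra. rewrite plus_IZR. simpl. lra.
Qed.

Lemma tt_y n : tt y0 n = if Nat.even n then y0 else z0.
Proof.
  destruct y0_facts as [Y [Z [E1 E2]]].
  induction n as [|n IH]. reflexivity.
  change (tt y0 (S n)) with (gauss (tt y0 n)). rewrite IH, even_S.
  destruct (Nat.even n); simpl; unfold gauss.
  - rewrite E1. rewrite (Int_part_eq _ 1). simpl. ring. simpl. lra.
  - rewrite E2. rewrite (Int_part_eq _ 3). simpl. ring. simpl. lra.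
Qed.

Lemma pq_y n : pq y0 n = if Nat.even n then 1%Z else 3%Z.
Proof.
  destruct y0_facts as [Y [Z [E1 E2]]].
  unfold pq. fold (tt y0 n). rewrite tt_y. destruct (Nat.even n).
  - rewrite E1. apply Int_part_eq. simpl. lra.
  - rewrite E2. apply Int_part_eq. simpl. lra.
Qed.

Lemma ax_y n : ax y0 n = if Nat.even n then 1%nat else 3%nat.
Proof. unfold ax. rewrite pq_y. destruct (Nat.even n); reflexivity. Qed.

Lemma div3_sq r w : (0 <= r < 3)%Z -> (r * r = 3 * w)%Z -> r = 0%Z.
Proof. intros H E. assert (Hc : (r = 0 \/ r = 1 \/ r = 2)%Z) by lia. destruct Hc as [Hc|[Hc|Hc]]; subst; lia. Qed.

Lemma descent : forall n (s t : Z), (Z.abs_nat t <= n)%nat -> (s * s = 21 * (t * t))%Z -> t = 0%Z.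
Proof.
  induction n as [|n IH]; intros s t Hn E.
  - lia.
  - pose proof (Z.div_mod s 3 ltac:(lia)) as Ds. pose proof (Z.mod_pos_bound s 3 ltac:(lia)) as Bs.
    set (k := (s / 3)%Z) in *. set (r := (s mod 3)%Z) in *.
    assert (r = 0%Z).
    { apply (div3_sq r (7 * (t*t) - 3 * (k*k) - 2 * k * r)); auto. rewrite Ds in E. nia. }
    rewrite H, Z.add_0_r in Ds. rewrite Ds in E.
    assert (E2 : (3 * (k * k) = 7 * (t * t))%Z) by nia.
    pose proof (Z.div_mod t 3 ltac:(lia)) as Dt. pose proof (Z.mod_pos_bound t 3 ltac:(lia)) as Bt.
    set (j := (t / 3)%Z) in *. set (r' := (t mod 3)%Z) in *.
    assert (Hr' : (r' * r' = 3 * (k * k - 21 * (j * j) - 14 * j * r' - 2 * (r' * r')))%Z).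
    { rewrite Dt in E2. nia. }
    assert (r' = 0%Z) by (apply (div3_sq r' _ Bt Hr')).
    rewrite H0, Z.add_0_r in Dt. rewrite Dt in E2.
    assert (E3 : (k * k = 21 * (j * j))%Z) by nia.
    assert (j = 0%Z).
    { apply (IH k j); auto. rewrite Dt in Hn. lia. }
    lia.
Qed.

Lemma y0_irr : irrational y0.
Proof.
  intros p q Hq E. destruct s21 as [S2 _].
  unfold y0 in E.
  assert (Hs : sqrt 21 = (2 * IZR p + 3 * IZR q) / IZR q).
  { apply not_0_IZR in Hq. field_simplify_eq; auto. apply (f_equal (fun r => r * (2 * IZR q))) in E.
    field_simplify in E; auto. lra. }
  rewrite Hs in S2. apply not_0_IZR in Hq as Hq'.
  assert (E2 : IZR ((2 * p + 3 * q) * (2 * p + 3 * q)) = IZR (21 * (q * q))).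
  { rewrite !mult_IZR, !plus_IZR, !mult_IZR. simpl.
    field_simplify in S2; auto. apply (f_equal (fun r => r * (IZR q * IZR q))) in S2.
    field_simplify in S2; auto. lra. }
  apply eq_IZR in E2. apply Hq. apply (descent (Z.abs_nat q) _ _ (le_n _) E2).
Qed.

Lemma fin_ineq_ub D K c X Y r : 0 <= D -> K <= c -> 0 <= Y -> c * Y <= r * X ->
  K * (D * Y) <= r * (D * X).
Proof.
  intros H1 H2 H3 H4.
  apply Rle_trans with (c * (D * Y)).
  apply Rmult_le_compat_r; auto. apply Rmult_le_pos; auto.
  replace (r * (D * X)) with (D * (r * X)) by ring. replace (c * (D * Y)) with (D * (c * Y)) by ring.
  apply Rmult_le_compat_l; auto.
Qed.

Lemma lam7 : lam * (1 - lam) * (1 - lam) * (1 - lam) <= 0.0345 /\ 1 - lam <= 0.382.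
Proof.
  destruct lam_bounds as [L E]. split; [|lra].
  apply Rle_trans with (0.618034 * 0.382 * 0.382 * 0.382); [|lra].
  repeat apply Rmult_le_compat; try lra; repeat apply Rmult_le_pos; lra.
Qed.



Lemma even_3p a (Hodd : forall k, Nat.even k = false -> a k = 3%nat) (Ha : forall k, (1 <= a k)%nat) m :
  Nat.even m = true -> 3 * INR (snd (Pm1 a m)) <= INR (snd (Pm a m)).
Proof.
  intro Ev. destruct m as [|m].
  - simpl. lra.
  - rewrite Pm_S, Pm1_S. rewrite even_S in Ev. assert (Nat.even m = false) by (destruct (Nat.even m); simpl in *; congruence).
    rewrite (Hodd m H). unfold vadd, sc; simpl fst; simpl snd.
    rewrite !plus_INR. simpl. pose proof (pos_INR (snd (Pm1 a m))). lra.
Qed.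

Lemma two_step_ii g (Hg : is_DTU lam g) a (Ha : forall k, (1 <= a k)%nat) m
  (Ev : Nat.even m = true) (HA : a m = 1%nat) (HB : a (S m) = 3%nat)
  (H3 : 3 * INR (snd (Pm1 a m)) <= INR (snd (Pm a m))) :
  Q g a (S (S m)) <= 0.85 * Q g a m.
Proof.
  rewrite (QSS_eq g Hg a Ha m Ev), Q_eq. cbv zeta.
  destruct (qp_facts a Ha m) as [Q1 [Q2 Q3]].
  set (q := INR (snd (Pm a m))) in *. set (p := INR (snd (Pm1 a m))) in *.
  pose proof (Rabs_pos (Dsg g a m)).
  destruct lam7 as [N1 N2]. destruct lam_bounds as [L E].
  rewrite HA, HB. simpl INR. simpl pow.
  apply fin_ineq_ub with (c := 0.0345); [auto|lra|nra|].
  assert (0 <= (q - 3 * p) * p) by nra. assert (0 <= (q - 3 * p) * q) by nra. nra.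
Qed.

Lemma one_step_ii g (Hg : is_DTU lam g) a (Ha : forall k, (1 <= a k)%nat) m
  (Ev : Nat.even m = true) (HA : a m = 1%nat) :
  Q g a (S m) <= 1.2 * Q g a m.
Proof.
  rewrite (QS_eq g Hg a Ha m), Q_eq, Ev. cbn [mu].
  destruct (qp_facts a Ha m) as [Q1 [Q2 Q3]].
  set (q := INR (snd (Pm a m))) in *. set (p := INR (snd (Pm1 a m))) in *.
  pose proof (Rabs_pos (Dsg g a m)).
  destruct lam7 as [N1 N2]. destruct lam_bounds as [L E].
  rewrite HA. simpl INR. simpl pow.
  replace (1 * (1 - lam) * Rabs (Dsg g a m) * (1 * q + p) * (1 * q + p + q))
      with ((1 - lam) * (Rabs (Dsg g a m) * ((q + p) * (2 * q + p)))) by ring.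
  apply fin_ineq_ub with (c := 0.382); [auto|lra|nra|nra].
Qed.

Lemma decay_ii g (Hg : is_DTU lam g) a (Ha : forall k, (1 <= a k)%nat)
  (Haa : forall k, a k = if Nat.even k then 1%nat else 3%nat) n :
  Q g a n <= 1.2 * 0.85 ^ (Nat.div2 n).
Proof.
  assert (Hodd : forall k, Nat.even k = false -> a k = 3%nat) by (intros k Hk; rewrite Haa, Hk; reflexivity).
  assert (Hev : forall k, Nat.even k = true -> a k = 1%nat) by (intros k Hk; rewrite Haa, Hk; reflexivity).
  assert (Hk : forall k, Q g a (2 * k) <= 0.85 ^ k /\ Q g a (S (2 * k)) <= 1.2 * 0.85 ^ k).
  { induction k as [|k [IH1 IH2]].
    - simpl. rewrite (Q0 g Hg a). split. lra.
      pose proof (one_step_ii g Hg a Ha 0%nat eq_refl (Hev 0%nat eq_refl)). rewrite (Q0 g Hg a) in H. lra.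
    - assert (E : (2 * S k = S (S (2 * k)))%nat) by lia.
      assert (Ek : Nat.even (S (2 * k)) = false) by (rewrite even_S, even_double; reflexivity).
      pose proof (two_step_ii g Hg a Ha (2*k) (even_double k) (Hev _ (even_double k)) (Hodd _ Ek)
                   (even_3p a Hodd Ha _ (even_double k))) as T.
      rewrite <- E in T.
      pose proof (one_step_ii g Hg a Ha (2 * S k) (even_double _) (Hev _ (even_double _))) as O.
      pose proof (Rabs_pos (Dsg g a (2 * S k))).
      simpl pow. split; lra. }
  pose proof (pow_le 0.85 (Nat.div2 n) ltac:(lra)).
  destruct (Nat.Even_or_Odd n) as [[k ->]|[k ->]].
  - rewrite Nat.div2_double in *. destruct (Hk k). lra.
  - rewrite Nat.add_1_r, Nat.div2_succ_double in *. destruct (Hk k). lra.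
Qed.

Lemma part_ii g (Hg : is_DTU lam g) : is_derive g y0 0.
Proof.
  destruct y0_facts as [Y _].
  assert (Hy : 0 <= y0 <= 1) by lra. pose proof y0_irr as Hi.
  set (a := ax y0). pose proof (ax_ge1 y0 Hy Hi) as Ha.
  assert (Ha' : forall k, a k = if Nat.even k then 1%nat else 3%nat) by (intro k; apply ax_y).
  assert (Hb3 : forall k, (a k <= 3)%nat) by (intro k; rewrite Ha'; destruct (Nat.even k); lia).
  pose proof (x_lohi y0 Hy Hi) as Hxl. fold a in Hxl.
  apply is_derive_Reals. intros eps Heps.
  destruct (pow_lt_1_zero 0.85 ltac:(rewrite Rabs_right; lra) (eps / 288) ltac:(lra)) as [N0 HN0].
  destruct (nbhd_lemma a Ha y0 Hxl (fun h => Rabs ((g (y0 + h) - g y0) / h - 0) < eps) (2 * N0)) as [d Hd].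
  - intros n h Hn Hin Hout Hh0.
    destruct (core g Hg a Ha Hb3 y0 Hxl n h Hin Hout Hh0) as [_ [C1 C2]].
    pose proof (decay_ii g Hg a Ha Ha' n) as G. unfold Q in G.
    assert (Kn : (N0 <= Nat.div2 n)%nat) by (apply Nat.div2_le_lower_bound; lia).
    specialize (HN0 _ Kn). rewrite Rabs_right in HN0 by (apply Rle_ge, pow_le; lra).
    rewrite Rminus_0_r, Rabs_right by lra.
    assert (INR 240 = 240) by (simpl; lra).
    nra.
  - exists d. intros h Hh0 Hh. apply Hd; auto.
Qed.

Theorem theorem3 (g : R -> R) (Hg : is_DTU (/ phi) g) :
  (forall x : R, 0 <= x <= 1 -> irrational x ->
     (forall n : nat, (pq x n <= 2)%Z) ->
     is_lim (fun h => (g (x + h) - g x) / h) (Finite 0) p_infty)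
  /\
  (exists y : R, 0 <= y <= 1 /\ irrational y /\
     (forall n : nat, (pq y n <= 3)%Z) /\
     is_derive g y 0).
Proof.
  split.
  - intros x Hx Hi H2. exact (part_i g Hg x Hx Hi H2).
  - exists y0. destruct y0_facts as [Y _]. split. lra. split. exact y0_irr.
    split. intro n. rewrite pq_y. destruct (Nat.even n); lia.
    exact (part_ii g Hg).
Qed.
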